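(* Let $n$ be a positive integer, $q=2^n$, $a_1\in\mathbb{F}_q^{*}$ and $b\in\mathbb{F}_{q^2}^{*}$. Define the Boolean function $h_1:\mathbb{F}_{q^2}\to\mathbb{F}_2$ by $h_1(x)=\mathrm{Tr}_1^{2n}\!\left(\frac{a_1}{x^{q-1}+b}\right)$. Then $h_1$ is bent if and only if one of the following conditions holds: (1) $b\in U\setminus\{1\}$ and $\mathrm{Tr}_1^{2n}\!\left(\frac{a_1}{b}\right)=0$; (2) $b\in\mathbb{F}_{q^2}^{*}\setminus U$, $\mathcal{K}_n\!\left(\frac{a_1}{1+b\overline{b}}\right)=0$ and $\mathrm{Tr}_1^{n}\!\left(\frac{a_1(b+\overline{b})}{(1+b\overline{b})\,b\overline{b}}\right)=0$.
   Context: For $k\mid m$, $\mathrm{Tr}_k^{m}(x)=x+x^{2^k}+\cdots+x^{2^{(m/k-1)k}}$ is the trace from $\mathbb{F}_{2^m}$ to $\mathbb{F}_{2^k}$. For $x\in\mathbb{F}_{q^2}$ ($q=2^n$) write $\overline{x}=x^{q}$. The unit circle is $U=\{\eta\in\mathbb{F}_{q^2}:\eta^{q+1}=1\}$. Division by zero is interpreted with the convention $\frac{1}{0}=0$ (i.e. $z^{-1}$ means $z^{q^2-2}$). The binary Kloosterman sum is $\mathcal{K}_n(a)=\sum_{x\in\mathbb{F}_{2^n}}(-1)^{\mathrm{Tr}_1^n(\frac1x+ax)}$ (with $\frac10=0$). A Boolean function $f:\mathbb{F}_{2^{m}}\to\mathbb{F}_2$ is bent if its Walsh transform $W_f(\omega)=\sum_{x\in\mathbb{F}_{2^m}}(-1)^{f(x)+\mathrm{Tr}_1^m(\omega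 x)}$ satisfies $W_f(\omega)^2=2^m$ for all $\omega\in\mathbb{F}_{2^m}$. *)

(* Defs.v *)
From HB Require Import structures.
From mathcomp Require Import all_boot all_order all_algebra all_field.
Set Implicit Arguments. Unset Strict Implicit. Unset Printing Implicit Defensive.
Import GRing.Theory.
Local Open Scope ring_scope.

(* Absolute trace Tr_1^m(x) = x + x^2 + ... + x^(2^(m-1)), computed inside a
   field F of characteristic 2 (meaningful for x in the subfield F_{2^m}). *)
Definition Tr1 (F : fieldType) (m : nat) (x : F) : F :=
  \sum_(i < m) x ^+ (2 ^ i).

Definition sgnF (F : fieldType) (t : F) : int := if t == 0 then 1 else -1.

(* Walsh transform of f : F_{2^m} -> F_2 (values 0/1 seen in F). *)
Definition walsh (F : finFieldType) (m : nat) (f : F -> F) (w : F) : int :=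
  \sum_(x : F) sgnF (f x + Tr1 m (w * x)).

Definition bent (F : finFieldType) (m : nat) (f : F -> F) : Prop :=
  forall w : F, walsh m f w ^+ 2 = (2 ^ m)%:Z.

(* Binary Kloosterman sum K_n(a) over the subfield F_{2^n} = {x | x^(2^n) = x}
   of F; x^-1 is mathcomp's inverse, with 0^-1 = 0. *)
Definition kloosterman (F : finFieldType) (n : nat) (a : F) : int :=
  \sum_(x : F | x ^+ (2 ^ n) == x) sgnF (Tr1 n (x^-1 + a * x)).

(* Main.v *)
Require Import Defs.
From HB Require Import structures.
From mathcomp Require Import all_boot all_order all_algebra all_field.
From mathcomp Require Import ring zify.
Set Implicit Arguments. Unset Strict Implicit. Unset Printing Implicit Defensive.
Import GRing.Theory Num.Theory.
Local Open Scope ring_scope.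

Section Main.
Variable F : finFieldType.
Variable n : nat.
Hypothesis n_gt0 : (0 < n)%N.
Hypothesis cardF : #|F| = (2 ^ (2 * n))%N.

Local Notation q := (2 ^ n)%N.

Lemma char2 : (2%N \in [pchar F]).
Proof. by apply: (card_finPcharP cardF). Qed.

Lemma two0 : (2%:R : F) = 0.
Proof. exact: pcharf0 char2. Qed.

Lemma addxx (x : F) : x + x = 0.
Proof. exact: (@addrr_pchar2 F char2 x). Qed.

Lemma addrKK (x y : F) : y + x + x = y.
Proof. by rewrite -addrA addxx addr0. Qed.

Lemma oppx (x : F) : - x = x.
Proof. exact: (@oppr_pchar2 F char2 x). Qed.

Lemma subx (x y : F) : x - y = x + y.
Proof. by rewrite oppx. Qed.

Lemma sqrD (x y : F) : (x + y) ^+ 2 = x ^+ 2 + y ^+ 2.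
Proof. have := two0; move=> H; ring: H. Qed.

Lemma exp2D k (x y : F) : (x + y) ^+ (2 ^ k) = x ^+ (2 ^ k) + y ^+ (2 ^ k).
Proof.
elim: k => [|k IH]; first by rewrite !expr1.
by rewrite expnSr !exprM IH sqrD.
Qed.

Lemma q_gt1 : (1 < q)%N.
Proof. by rewrite -{1}(expn0 2) ltn_exp2l. Qed.

Lemma qq : (q * q)%N = #|F|.
Proof. by rewrite cardF -expnD addnn -mul2n. Qed.

Lemma expq_card (x : F) : x ^+ (q * q) = x.
Proof. by rewrite qq expf_card. Qed.

Lemma conjK (x : F) : (x ^+ q) ^+ q = x.
Proof. by rewrite -exprM expq_card. Qed.

Lemma conjD (x y : F) : (x + y) ^+ q = x ^+ q + y ^+ q.
Proof. exact: exp2D. Qed.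

Lemma conjV (x : F) : (x^-1) ^+ q = (x ^+ q)^-1.
Proof. by rewrite exprVn. Qed.

Lemma TrD m (x y : F) : Tr1 m (x + y) = Tr1 m x + Tr1 m y.
Proof. by rewrite /Tr1 -big_split /=; apply: eq_bigr => i _; rewrite exp2D. Qed.

Lemma Tr0 m : Tr1 m (0 : F) = 0.
Proof. by rewrite /Tr1 big1 // => i _; rewrite expr0n expn_eq0. Qed.

Lemma Tr_sq m (x : F) : Tr1 m (x ^+ 2) + x = Tr1 m x + x ^+ (2 ^ m).
Proof.
have E1 := big_ord_recl m (fun i : 'I_m.+1 => x ^+ (2 ^ i)).
have E2 := big_ord_recr m (fun i : 'I_m.+1 => x ^+ (2 ^ i)).
rewrite /Tr1 -E2 E1 /= expn0 expr1 addrC; congr (_ + _).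
by apply: eq_bigr => i _; rewrite -exprM -expnS.
Qed.

Lemma Tr_tele m (w : F) : Tr1 m (w ^+ 2 + w) = w ^+ (2 ^ m) + w.
Proof.
rewrite TrD.
have H := Tr_sq m w.
have -> : Tr1 m (w ^+ 2) = Tr1 m w + w ^+ (2 ^ m) + w.
  by rewrite -H -addrA addxx addr0.
by rewrite addrC !addrA addxx add0r.
Qed.

Lemma Tr_sqr m (x : F) : (Tr1 m x) ^+ 2 = Tr1 m (x ^+ 2).
Proof.
rewrite /Tr1 -(pFrobenius_autE char2) rmorph_sum /=.
by apply: eq_bigr => i _; rewrite pFrobenius_autE -!exprM mulnC.
Qed.

Lemma Tr01 m (x : F) : x ^+ (2 ^ m) = x -> Tr1 m x = 0 \/ Tr1 m x = 1.
Proof.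
move=> Hx.
have H : Tr1 m x ^+ 2 = Tr1 m x.
  have := Tr_sq m x; rewrite Hx -Tr_sqr => H.
  by apply: (addIr x).
have : Tr1 m x * (Tr1 m x - 1) = 0 by rewrite mulrBr mulr1 -expr2 H subrr.
move/eqP; rewrite mulf_eq0 subr_eq0 => /orP [/eqP ->|/eqP ->]; by [left|right].
Qed.

Lemma Tr2n01 (x : F) : Tr1 (2 * n) x = 0 \/ Tr1 (2 * n) x = 1.
Proof. apply: Tr01; by rewrite -cardF expf_card. Qed.

Lemma Tr2n_split (x : F) : Tr1 (2 * n) x = Tr1 n (x + x ^+ q).
Proof.
rewrite TrD /Tr1.
have E : forall (y : F) m, \sum_(i < m) y ^+ (2 ^ i) = \sum_(0 <= i < m) y ^+ (2 ^ i).
  by move=> y m; rewrite big_mkord.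
rewrite !E (big_cat_nat _ (n := n)) //=; last by rewrite mul2n -addnn leq_addr.
congr (_ + _).
rewrite -{1}(add0n n) big_addn mul2n -addnn addnK.
by apply: eq_bigr => i _; rewrite -exprM -expnD addnC.
Qed.

Lemma sgnD (s t : F) : (s = 0 \/ s = 1) -> (t = 0 \/ t = 1) ->
  sgnF (s + t) = sgnF s * sgnF t.
Proof.
rewrite /sgnF => [[->|->] [->|->]]; rewrite ?addr0 ?add0r ?addxx ?eqxx ?oner_eq0 //.
Qed.

Lemma sgn_sq (s : F) : sgnF s * sgnF s = 1.
Proof. by rewrite /sgnF; case: ifP. Qed.


Definition inFq (x : F) : bool := x ^+ q == x.
Definition inU (x : F) : bool := x ^+ q.+1 == 1.

Lemma inFq0 : inFq 0.
Proof. by rewrite /inFq expr0n expn_eq0. Qed.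
Lemma inFq1 : inFq 1.
Proof. by rewrite /inFq expr1n. Qed.
Lemma inFqD x y : inFq x -> inFq y -> inFq (x + y).
Proof. by rewrite /inFq conjD => /eqP -> /eqP ->. Qed.
Lemma inFqM x y : inFq x -> inFq y -> inFq (x * y).
Proof. by rewrite /inFq exprMn => /eqP -> /eqP ->. Qed.
Lemma inFqV x : inFq x -> inFq x^-1.
Proof. by rewrite /inFq conjV => /eqP ->. Qed.
Lemma inFq_conj x : inFq (x + x ^+ q).
Proof. by rewrite /inFq conjD conjK addrC. Qed.
Lemma inFq_norm x : inFq (x * x ^+ q).
Proof. by rewrite /inFq exprMn conjK mulrC. Qed.

Lemma inU_neq0 u : inU u -> u != 0.
Proof. by rewrite /inU; apply: contraL => /eqP ->; rewrite expr0n /= eq_sym oner_eq0. Qed.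

Lemma inU_conj u : inU u -> u ^+ q = u^-1.
Proof.
move=> Hu; have u0 := inU_neq0 Hu.
move: Hu; rewrite /inU exprSr => /eqP H.
by rewrite -[LHS](mulfK u0) H mul1r.
Qed.

Lemma inU1 : inU 1.
Proof. by rewrite /inU expr1n. Qed.

Lemma inUV u : inU u -> inU u^-1.
Proof. by rewrite /inU exprVn => /eqP ->; rewrite invr1. Qed.

Lemma inUM u v : inU u -> inU v -> inU (u * v).
Proof. by rewrite /inU exprMn => /eqP -> /eqP ->; rewrite mulr1. Qed.

Lemma inU_Fq u : inU u -> inFq u -> u = 1.
Proof.
rewrite /inU /inFq exprSr => /eqP H /eqP H2.
have : (u + 1) ^+ 2 = 0 by rewrite sqrD expr1n expr2 -{1}H2 H addxx.
by move/eqP; rewrite expf_eq0 /= addr_eq0 oppx => /eqP.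
Qed.

Lemma pow_card1 (x : F) : x != 0 -> x ^+ ((q * q).-1)%N = 1.
Proof.
move=> x0; have := expq_card x.
have -> : (q * q = ((q * q).-1).+1)%N by rewrite prednK // muln_gt0 expn_gt0.
by rewrite exprSr => H; apply: (mulIf x0); rewrite mul1r.
Qed.

Lemma qm1_qp1 : ((q - 1) * q.+1 = (q * q).-1)%N.
Proof. have := q_gt1; nia. Qed.

Lemma inU_pow (x : F) : x != 0 -> inU (x ^+ (q - 1)).
Proof. by move=> x0; rewrite /inU -exprM qm1_qp1 pow_card1. Qed.

Definition Fqs := [pred x : F | inFq x && (x != 0)].

Lemma card_Fq_Fqs : #|[pred x | inFq x]| = (#|Fqs|).+1.
Proof.
rewrite (cardD1 0) inE inFq0 /= add1n; congr (_.+1); apply: eq_card => x.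
by rewrite !inE andbC.
Qed.

Lemma Fqs_le : (#|Fqs| <= q - 1)%N.
Proof.
rewrite cardE; apply: max_unity_roots; first by rewrite subn_gt0 q_gt1.
  apply/allP => x; rewrite mem_enum !inE unity_rootE => /andP [/eqP Hx x0].
  have : x ^+ (q - 1) * x = 1 * x by rewrite -exprSr subn1 prednK ?expn_gt0 // Hx mul1r.
  by move/(mulIf x0) => ->.
exact: enum_uniq.
Qed.

Lemma U_le : (#|[pred x | inU x]| <= q.+1)%N.
Proof.
rewrite cardE; apply: max_unity_roots => //.
  by apply/allP => x; rewrite mem_enum !inE unity_rootE.
exact: enum_uniq.
Qed.

Definition fib (u : F) := [pred x : F | (x != 0) && (x ^+ (q - 1) == u)].

Lemma fib_le u : (#|fib u| <= #|Fqs|)%N.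
Proof.
case: (pickP (fib u)) => [x0 Hx0|H0]; last by rewrite eq_card0.
move: (Hx0); rewrite inE => /andP [x00 /eqP Hu].
have inj : {in fib u &, injective (fun x => x / x0)}.
  by move=> x y _ _ /=; apply: (mulIf (invr_neq0 x00)).
rewrite -(card_in_imset inj); apply: subset_leq_card; apply/subsetP => y.
move/imsetP => [x]; rewrite inE => /andP [x0' /eqP Hx] ->.
rewrite inE /inFq; apply/andP; split; last by rewrite mulf_neq0 ?invr_neq0.
have H1 : (x / x0) ^+ (q - 1) = 1.
  by rewrite exprMn exprVn Hx Hu mulfV // -Hu expf_neq0.
have : (x / x0) ^+ q = (x / x0) ^+ (q - 1) * (x / x0).
  by rewrite -exprSr subn1 prednK ?expn_gt0.
by rewrite H1 mul1r => ->.
Qed.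

Lemma sum_fib : (\sum_(u in [pred x | inU x]) #|fib u| = (q * q).-1)%N.
Proof.
rewrite qq -(cardC1 0) -sum1_card.
rewrite [RHS](partition_big (fun x => x ^+ (q - 1)) (fun u => inU u)) /=; last first.
  by move=> x Hx; apply: inU_pow; move: Hx; rewrite !inE.
apply: eq_bigr => u Hu; rewrite -sum1_card; apply: eq_bigl => x.
by rewrite !inE.
Qed.

Lemma counts : #|[pred x | inU x]| = q.+1 /\ #|Fqs| = (q - 1)%N.
Proof.
have H : ((q * q).-1 <= #|[pred x | inU x]| * #|Fqs|)%N.
  rewrite -sum_fib -sum_nat_const; apply: leq_sum => u _; exact: fib_le.
have := U_le; have := Fqs_le; have := q_gt1; nia.
Qed.

Lemma card_U : #|[pred x | inU x]| = q.+1.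
Proof. by case: counts. Qed.

Lemma card_Fqs : #|Fqs| = (q - 1)%N.
Proof. by case: counts. Qed.

Lemma card_Fq : #|[pred x | inFq x]| = q.
Proof. by rewrite card_Fq_Fqs card_Fqs subn1 prednK ?expn_gt0. Qed.

Lemma surjU u : inU u -> exists x, x != 0 /\ x ^+ (q - 1) = u.
Proof.
move=> Hu; case: (pickP (fib u)) => [x|H0].
  by rewrite inE => /andP [x0 /eqP H]; exists x.
exfalso.
have := sum_fib; rewrite (bigD1 u) //= eq_card0 // add0n.
have : (\sum_(i in [pred x | inU x] | i != u) #|fib i| <= q * (q - 1))%N.
  apply: (@leq_trans (\sum_(i in [pred x | inU x] | i != u) (q - 1))).
    by apply: leq_sum => i _; rewrite -card_Fqs fib_le.
  rewrite sum_nat_const; apply: leq_mul => //.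
  have := cardD1 u [pred x | inU x]; rewrite card_U inE Hu add1n => [[]] ->.
  by apply: subset_leq_card; apply/subsetP => x; rewrite !inE andbC.
move=> A B; rewrite B in A; move: A; have := q_gt1; nia.
Qed.

Lemma TrFq01 y : inFq y -> Tr1 n y = 0 \/ Tr1 n y = 1.
Proof. by move=> /eqP H; apply: Tr01. Qed.

Definition TrP : {poly F} := \sum_(i < n) 'X^(2 ^ i).

Lemma TrP_horner y : TrP.[y] = Tr1 n y.
Proof. by rewrite /TrP horner_sum; apply: eq_bigr => i _; rewrite hornerXn. Qed.

Lemma TrP_neq0 : TrP != 0.
Proof.
apply/eqP => H.
have : TrP`_1 = 1.
  rewrite /TrP coef_sum; case: n n_gt0 => // m _.
  rewrite big_ord_recl /= coefXn expn0 eqxx big1 ?addr0 // => i _.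
  rewrite coefXn; case: eqP => // H1; exfalso; move: H1; rewrite /bump /= add1n expnS; have := expn_gt0 2 i; lia.
by rewrite H coef0 => /eqP; rewrite eq_sym oner_eq0.
Qed.

Lemma TrP_size : (size TrP <= (2 ^ n.-1).+1)%N.
Proof.
apply: (leq_trans (size_sum _ _ _)); apply/bigmax_leqP => i _.
rewrite size_polyXn ltnS leq_exp2l //.
by rewrite -ltnS prednK.
Qed.

Lemma exists_Tr1 : exists y0, inFq y0 /\ Tr1 n y0 = 1.
Proof.
case: (pickP [pred y | inFq y && (Tr1 n y == 1)]) => [y /andP [Hy /eqP H]|H0].
  by exists y.
exfalso.
have := max_poly_roots TrP_neq0 (rs := enum [pred y | inFq y]).
rewrite enum_uniq -cardE card_Fq.
have -> : all (root TrP) (enum [pred y | inFq y]).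
  apply/allP => y; rewrite mem_enum inE => Hy.
  rewrite /root TrP_horner; have := H0 y; rewrite /= Hy /=.
  by case: (TrFq01 Hy) => ->; rewrite ?eqxx // oner_eq0.
move=> /(_ isT isT) H.
have := leq_trans H TrP_size.
case: n n_gt0 => // m _; rewrite /= expnS ltnS; have := expn_gt0 2 m; lia.
Qed.

Lemma exists_Tr1c c : inFq c -> c != 0 -> exists t, inFq t /\ Tr1 n (c * t) = 1.
Proof.
move=> Hc c0; case: exists_Tr1 => y0 [Hy0 H].
by exists (c^-1 * y0); rewrite mulrA mulfV // mul1r inFqM // inFqV.
Qed.

Lemma sgnF0 : sgnF (0 : F) = 1.
Proof. by rewrite /sgnF eqxx. Qed.

Lemma sgnF1 : sgnF (1 : F) = -1.
Proof. by rewrite /sgnF oner_eq0. Qed.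

Lemma charsum c : inFq c ->
  \sum_(y | inFq y) sgnF (Tr1 n (c * y)) = if c == 0 then (q%:Z) else 0.
Proof.
move=> Hc; case: eqP => [->|/eqP c0].
  rewrite (eq_bigr (fun _ => 1)); last by move=> y _; rewrite mul0r Tr0 sgnF0.
  by rewrite (sumr_const [pred y | inFq y]) card_Fq natz.
case: (exists_Tr1c Hc c0) => t [Ht H1].
set s := (X in X = _).
have : s = - s.
  rewrite {1}/s (reindex_inj (addIr t)) /=.
  rewrite -sumrN; apply: eq_big => y.
    apply/idP/idP => Hy; last exact: inFqD.
    by rewrite -(addrK_pchar2 char2 t y) inFqD.
  move=> Hy; have Hy' : inFq y by rewrite -(addrK_pchar2 char2 t y) inFqD.
  rewrite mulrDr TrD H1 sgnD ?sgnF1 ?mulrN1 //; last by right.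
  by apply: TrFq01; apply: inFqM.
lia.
Qed.

Lemma charsum2 z :
  \sum_(y | inFq y) sgnF (Tr1 (2 * n) (z * y)) = if z + z ^+ q == 0 then (q%:Z) else 0.
Proof.
rewrite -(charsum (inFq_conj z)); apply: eq_bigr => y /eqP Hy.
by rewrite Tr2n_split exprMn Hy mulrDl.
Qed.

Lemma sgnF_pm (t : F) : sgnF t = 1 \/ sgnF t = -1.
Proof. by rewrite /sgnF; case: ifP; [left|right]. Qed.

Lemma expr0qm1 : (0 : F) ^+ (q - 1) = 0.
Proof. by rewrite expr0n subn_eq0 leqNgt q_gt1. Qed.

Lemma fiber_cond (x0 u y : F) : x0 != 0 -> x0 ^+ (q - 1) = u ->
  ((x0 * y != 0) && ((x0 * y) ^+ (q - 1) == u)) = inFq y && (y != 0).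
Proof.
move=> x00 Hu; have u0 : u != 0 by rewrite -Hu expf_neq0.
rewrite mulf_eq0 negb_or x00 /= exprMn Hu.
case: (eqVneq y 0) => [->|y0]; first by rewrite andbF.
rewrite /= andbT -[X in _ == X](mulr1 u) (inj_eq (mulfI u0)) /inFq.
have E : y ^+ q = y ^+ (q - 1) * y by rewrite -exprSr subn1 prednK ?expn_gt0.
rewrite E -[X in _ * _ == X](mul1r y) (inj_eq (mulIf y0)).
done.
Qed.

Lemma cond_equiv (w x0 u : F) : x0 != 0 -> x0 ^+ (q - 1) = u ->
  ((w * x0) + (w * x0) ^+ q == 0) = (w == 0) || (w ^+ (q - 1) * u == 1).
Proof.
move=> x00 Hu; set z := w * x0.
have E : z ^+ q = z ^+ (q - 1) * z by rewrite -exprSr subn1 prednK ?expn_gt0.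
rewrite E -{1}(mul1r z) -mulrDl mulf_eq0 addr_eq0 oppx eq_sym orbC.
by rewrite /z mulf_eq0 (negbTE x00) orbF exprMn Hu.
Qed.

Section Walsh.
Variable G : F -> F.
Hypothesis HG : forall u, G u = 0 \/ G u = 1.
Let f := fun x : F => G (x ^+ (q - 1)).

Lemma walsh_formula w : walsh (2 * n) f w = sgnF (G 0) +
  \sum_(u | inU u) sgnF (G u) *
     ((if (w == 0) || (w ^+ (q - 1) * u == 1) then q%:Z else 0) - 1).
Proof.
rewrite /walsh (bigD1 0) //= /f expr0qm1 mulr0 Tr0 addr0; congr (_ + _).
rewrite (partition_big (fun x => x ^+ (q - 1)) inU) /=; last by move=> x; apply: inU_pow.
apply: eq_bigr => u Hu.
rewrite (eq_bigr (fun x => sgnF (G u) * sgnF (Tr1 (2 * n) (w * x)))); last first.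
  by move=> x /andP [_ /eqP ->]; rewrite sgnD //; apply: Tr2n01.
rewrite -mulr_sumr; congr (_ * _).
case: (surjU Hu) => x0 [x00 Hx0].
rewrite (reindex_inj (mulfI x00)) /=.
rewrite (eq_bigl (fun y => inFq y && (y != 0))); last by move=> y; apply: fiber_cond.
have := charsum2 (w * x0); rewrite (bigD1 0) ?inFq0 //= mulr0 Tr0 sgnF0.
rewrite (cond_equiv w x00 Hx0) => H.
rewrite -H addrC addrK; apply: eq_bigr => y _; by rewrite mulrA.
Qed.

Let S := \sum_(u | inU u) sgnF (G u).

Lemma walsh0 : walsh (2 * n) f 0 = sgnF (G 0) + S * (q%:Z - 1).
Proof.
rewrite walsh_formula eqxx /= /S mulr_suml; congr (_ + _).
Qed.

Lemma walshw w u : w != 0 -> inU u -> w ^+ (q - 1) * u = 1 ->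
  walsh (2 * n) f w = sgnF (G 0) - S + q%:Z * sgnF (G u).
Proof.
move=> w0 Hu Hwu; rewrite walsh_formula (negbTE w0) /=.
have wq0 : w ^+ (q - 1) != 0 by rewrite expf_neq0.
rewrite (bigD1 u) //= Hwu eqxx.
rewrite (eq_bigr (fun v => - sgnF (G v))); last first.
  move=> v /andP [_ vu]; case: eqP => [H|_]; last by rewrite sub0r mulrN1.
  by exfalso; move: vu; rewrite -Hwu in H; move/(mulfI wq0): H => ->; rewrite eqxx.
rewrite sumrN /S [in RHS](bigD1 u) //=.
ring.
Qed.

Lemma card_Uz : (#|[pred x | inU x]|)%:Z = (q%:Z + 1).
Proof. by rewrite card_U -addn1 PoszD. Qed.

Lemma twon_q : ((2 ^ (2 * n))%N)%:Z = q%:Z ^+ 2.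
Proof. by rewrite -cardF -qq PoszM expr2. Qed.

Lemma bent_suff : S = sgnF (G 0) -> bent (2 * n) f.
Proof.
move=> HS w; rewrite twon_q.
case: (eqVneq w 0) => [->|w0].
  rewrite walsh0 HS; case: (sgnF_pm (G 0)) => ->; ring.
have wq0 : w ^+ (q - 1) != 0 by rewrite expf_neq0.
have Hu : inU (w ^+ (q - 1))^-1 by apply/inUV/inU_pow.
rewrite (walshw w0 Hu) ?mulfV // HS subrr add0r.
case: (sgnF_pm (G (w ^+ (q - 1))^-1)) => ->; ring.
Qed.

Lemma bent_nec : bent (2 * n) f ->
  S = sgnF (G 0) \/ (q = 2%N /\ forall u, inU u -> sgnF (G u) = - sgnF (G 0)).
Proof.
move=> Hb.
have Hu : forall u, inU u -> (sgnF (G 0) - S + q%:Z * sgnF (G u)) ^+ 2 = q%:Z ^+ 2.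
  move=> u Hu; case: (surjU Hu) => x [x0 Hx].
  have w0 : x^-1 != 0 by rewrite invr_neq0.
  rewrite -(walshw w0 Hu); first by rewrite Hb twon_q.
  by rewrite exprVn -Hx mulVf // expf_neq0.
set e := sgnF (G 0).
case: (eqVneq S e) => [|SE]; first by left.
right.
have qpos : (1 < q%:Z)%R by rewrite ltz_nat q_gt1.
have Hs : forall u, inU u -> e - S = - (2 * q%:Z * sgnF (G u)).
  move=> u /Hu H.
  have : (e - S) * (e - S + 2 * q%:Z * sgnF (G u)) = 0.
    by case: (sgnF_pm (G u)) => E; rewrite E in H *; nia.
  move/eqP; rewrite mulf_eq0 subr_eq0 eq_sym (negbTE SE) /= => /eqP H2.
  by apply/eqP; rewrite -addr_eq0 H2.
have Hc : forall u, inU u -> sgnF (G u) = sgnF (G 1).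
  move=> u Hu'; have := Hs u Hu'; rewrite (Hs 1 inU1).
  by case: (sgnF_pm (G u)) => ->; case: (sgnF_pm (G 1)) => ->; lia.
have HS : S = (q%:Z + 1) * sgnF (G 1).
  rewrite /S (eq_bigr (fun _ => sgnF (G 1))); last by move=> u Hu'; apply: Hc.
  by rewrite (sumr_const [pred x | inU x]) -mulr_natl natz card_Uz.
have H1 := Hs 1 inU1; rewrite HS in H1.
have Hq : q = 2%N.
  move: H1 qpos; rewrite /e; case: (sgnF_pm (G 0)) => ->; case: (sgnF_pm (G 1)) => ->;
  move=> H1 qpos; apply/eqP; rewrite -eqz_nat; apply/eqP; lia.
split => // u Hu'; rewrite Hc //.
move: H1; rewrite /e Hq; case: (sgnF_pm (G 0)) => ->; case: (sgnF_pm (G 1)) => -> H1 //; lia.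
Qed.

End Walsh.

Section Kloost.
Variable a : F.
Hypothesis Ha : inFq a.
Hypothesis a0 : a != 0.

Definition phi (v : F) := v + v ^+ q.
Definition fibK (x : F) := #|[pred v | inU v && (v != 1) && (phi v == x)]|.

Lemma phi_in v : inU v -> v != 1 -> Fqs (phi v).
Proof.
move=> Hu v1; rewrite inE inFq_conj /=; apply/negP => /eqP H.
have : inFq v.
  have H' : v + v ^+ q = 0 by exact: H.
  by rewrite /inFq eq_sym -[X in _ == X]oppx -addr_eq0 H'.
by move/(inU_Fq Hu) => H1; move: v1; rewrite H1 eqxx.
Qed.

Lemma T_split :
  \sum_(v | inU v) sgnF (Tr1 (2 * n) (a * v)) =
  1 + \sum_(v | inU v && (v != 1)) sgnF (Tr1 n (a * phi v)).
Proof.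
rewrite (bigD1 1) ?inU1 //= mulr1 Tr2n_split (eqP Ha) addxx Tr0 sgnF0; congr (_ + _).
apply: eq_bigr => v _; by rewrite Tr2n_split exprMn (eqP Ha) -mulrDr.
Qed.

Lemma part_phi (h : F -> int) :
  \sum_(v | inU v && (v != 1)) h (phi v) = \sum_(x | Fqs x) h x * (fibK x)%:Z.
Proof.
rewrite (partition_big phi Fqs) /=; last by move=> v /andP [Hu v1]; apply: phi_in.
apply: eq_bigr => x Hx.
rewrite (eq_bigr (fun _ => h x)); last by move=> v /andP [_ /eqP ->].
rewrite -natz mulr_natr /fibK -sumr_const.
by apply: eq_bigl => v; rewrite !inE.
Qed.

Lemma fib_tr1 v : inU v -> v != 1 -> Tr1 n (phi v)^-1 = 1.
Proof.
move=> Hu v1; have v0 := inU_neq0 Hu.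
have v10 : v + 1 != 0 by rewrite addr_eq0 oppx.
have H2 := two0.
set w := (v + 1)^-1.
have -> : (phi v)^-1 = w ^+ 2 + w.
  have E : (v + 1) ^+ 2 = v * v + 1 by rewrite sqrD expr1n expr2.
  have v2 : v * v + 1 != 0 by rewrite -E expf_neq0.
  rewrite /phi /w (inU_conj Hu); field: H2; by rewrite v10 v0 v2.
rewrite Tr_tele /w conjV conjD (inU_conj Hu) expr1n; field: H2; by rewrite v10 v0.
Qed.

Lemma fibK_le x : (fibK x <= 2)%N.
Proof.
rewrite /fibK; case: (pickP [pred v | inU v && (v != 1) && (phi v == x)]) => [v0 Hv0|H0];
  last by rewrite eq_card0.
move: Hv0; rewrite inE => /andP [/andP [Hu0 _] /eqP Hx].
apply: (@leq_trans #|[set v0; v0^-1]|); last by rewrite cards2; case: (_ != _).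
apply: subset_leq_card.
apply/subsetP => w; rewrite !inE => /andP [/andP [Hu w1] /eqP Hw].
have w0 := inU_neq0 Hu; have v00 := inU_neq0 Hu0.
have H2 := two0.
have : (w - v0) * (w - v0^-1) = 0.
  move: Hw; rewrite -Hx /phi !inU_conj // => Hw.
  have E : v0 + v0^-1 = w + w^-1 by rewrite Hw.
  have -> : (w - v0) * (w - v0^-1) = w * w - w * (v0 + v0^-1) + v0 * v0^-1 by ring.
  by rewrite E mulfV // mulrDr mulfV //; ring: H2.
by move/eqP; rewrite mulf_eq0 !subr_eq0.
Qed.

Lemma fibK_0 x : Tr1 n x^-1 != 1 -> fibK x = 0%N.
Proof.
move=> H; rewrite /fibK; apply: eq_card0 => v; rewrite !inE.
apply/negP => /andP [/andP [Hu v1] /eqP Hx].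
by move: H; rewrite -Hx fib_tr1 ?eqxx.
Qed.

Lemma card_U1 : #|[pred v | inU v && (v != 1)]| = q.
Proof.
have := cardD1 1 [pred x | inU x]; rewrite card_U inE inU1 add1n => [[]] ->.
by apply: eq_card => v; rewrite !inE andbC.
Qed.

Lemma sum_fibK : \sum_(x | Fqs x) (fibK x)%:Z = q%:Z.
Proof.
have H := part_phi (fun _ => 1); simpl in H.
rewrite (eq_bigr (fun x => 1 * (fibK x)%:Z)); last by move=> x _; rewrite mul1r.
by rewrite -H (sumr_const [pred v | inU v && (v != 1)]) card_U1 natz.
Qed.

Lemma sgnTr_Fqs c : inFq c -> c != 0 ->
  \sum_(x | Fqs x) sgnF (Tr1 n (c * x)) = -1.
Proof.
move=> Hc c0; have := charsum Hc; rewrite (negbTE c0) (bigD1 0) ?inFq0 //= mulr0 Tr0 sgnF0.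
move=> H; apply/eqP; rewrite -(inj_eq (addrI 1)) subrr; apply/eqP; rewrite -[X in _ = X]H; congr (_ + _); apply: eq_bigl => x; by rewrite inE.
Qed.

Lemma count_J : \sum_(x | Fqs x) (1 - sgnF (Tr1 n x^-1)) = q%:Z.
Proof.
rewrite sumrB (sumr_const Fqs) card_Fqs.
rewrite (reindex_inj invr_inj) /=.
rewrite (eq_bigl Fqs); last first.
  move=> x; rewrite !inE invr_eq0; apply/andP/andP => [[H1 H2]|[H1 H2]]; split => //.
    by rewrite -[x]invrK inFqV.
  by apply: inFqV.
rewrite (eq_bigr (fun x => sgnF (Tr1 n (1 * x)))); last by move=> x _; rewrite invrK mul1r.
rewrite sgnTr_Fqs ?inFq1 ?oner_eq0 // opprK -natz natrB; last by rewrite expn_gt0.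
by rewrite subrK.
Qed.

Lemma fibK_eq x : Fqs x -> (fibK x)%:Z = 1 - sgnF (Tr1 n x^-1).
Proof.
move=> Hx.
have H : forall y, Fqs y -> 0 <= (1 - sgnF (Tr1 n y^-1)) - (fibK y)%:Z.
  move=> y Hy; move: Hy (fibK_le y); rewrite inE => /andP [Hy y0].
  case: (TrFq01 (inFqV Hy)) => E.
    by rewrite E sgnF0 subrr fibK_0 // E eq_sym oner_eq0.
  rewrite E sgnF1 opprK => Hl; rewrite subr_ge0.
  by have -> : (1 + 1 : int) = 2%:Z by []; rewrite lez_nat.
have := psumr_eq0P H; rewrite sumrB count_J sum_fibK subrr => /(_ erefl x Hx).
by move/eqP; rewrite subr_eq0 => /eqP.
Qed.

Lemma T_K : \sum_(v | inU v) sgnF (Tr1 (2 * n) (a * v)) = 1 - kloosterman n a.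
Proof.
rewrite T_split (part_phi (fun x => sgnF (Tr1 n (a * x)))).
rewrite (eq_bigr (fun x => sgnF (Tr1 n (a * x)) - sgnF (Tr1 n (x^-1 + a * x)))); last first.
  move=> x Hx; rewrite fibK_eq // mulrBr mulr1; congr (_ - _).
  move: Hx; rewrite inE => /andP [Hx _].
  rewrite TrD sgnD; [exact: mulrC | apply: TrFq01; exact: inFqV | apply: TrFq01; exact: inFqM].
rewrite sumrB sgnTr_Fqs //.
rewrite /kloosterman [in RHS](bigD1 0) /=; last by rewrite expr0n expn_eq0.
rewrite invr0 mulr0 addr0 Tr0 sgnF0.
rewrite (eq_bigl Fqs); last by move=> x; rewrite inE.
ring.
Qed.

Lemma K_ne2 : (2 < q)%N -> kloosterman n a != 2.
Proof.
move=> q2.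
have Hd : (4 %| \sum_(x | Fqs x) (sgnF (Tr1 n (a * x)) - 1) * (fibK x)%:Z)%Z.
  apply: rpred_sum => x Hx; rewrite fibK_eq //.
  case: (sgnF_pm (Tr1 n (a * x))) => ->; case: (sgnF_pm (Tr1 n x^-1)) => ->;
  apply/dvdzP; [exists 0 | exists 0 | exists 0 | exists (-1)]; reflexivity.
have Hq : (4 %| q%:Z)%Z.
  apply/dvdzP; exists (2 ^ (n - 2))%N%:Z.
  have n2 : (2 <= n)%N.
    case: n n_gt0 q2 => [|[|m]] //.
  have -> : (4 : int) = (2 ^ 2)%N%:Z by [].
  by rewrite -PoszM -expnD subnK.
have := T_K; rewrite T_split (part_phi (fun x => sgnF (Tr1 n (a * x)))).
have -> : \sum_(x | Fqs x) sgnF (Tr1 n (a * x)) * (fibK x)%:Z =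
  \sum_(x | Fqs x) (sgnF (Tr1 n (a * x)) - 1) * (fibK x)%:Z + q%:Z.
  by rewrite -sum_fibK -big_split /=; apply: eq_bigr => x _; ring.
move: Hd Hq => /dvdzP [k ->] /dvdzP [l ->] H.
apply/eqP => HK; rewrite HK in H; lia.
Qed.

End Kloost.

Lemma inU_conjq x : inU (x ^+ q) = inU x.
Proof.
rewrite /inU -exprM mulnC exprM; apply/eqP/eqP => [H|->]; last by rewrite expr1n.
by rewrite -[_ ^+ q.+1]conjK H expr1n.
Qed.

Lemma sgn_eq1 (t : F) : sgnF t = 1 -> t = 0.
Proof. by rewrite /sgnF; case: eqP => // _ /eqP; rewrite -subr_eq0 opprK. Qed.

Section MainThm.
Variables a1 b : F.
Hypothesis Ha1 : inFq a1.
Hypothesis a10 : a1 != 0.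
Hypothesis b0 : b != 0.

Definition G := fun u : F => Tr1 (2 * n) (a1 / (u + b)).
Lemma HG u : G u = 0 \/ G u = 1.
Proof. exact: Tr2n01. Qed.

Lemma Gb : G b = 0.
Proof. by rewrite /G addxx invr0 mulr0 Tr0. Qed.

Lemma sgnGb : sgnF (G b) = 1.
Proof. by rewrite Gb sgnF0. Qed.

Lemma G0 : G 0 = Tr1 (2 * n) (a1 / b).
Proof. by rewrite /G add0r. Qed.

Lemma SUb : inU b ->
  \sum_(u | inU u) sgnF (G u) = 1 + \sum_(u | inU u && (u != b)) sgnF (G u).
Proof. by move=> Hb; rewrite (bigD1 b) //= sgnGb. Qed.

Lemma notbent_b1 : b = 1 ->
  ~ bent (2 * n) (fun x : F => Tr1 (2 * n) (a1 / (x ^+ (q - 1) + b))).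
Proof.
move=> b1 Hbent; have Hb : inU b by rewrite b1 inU1.
have e1 : sgnF (G 0) = 1.
  by rewrite G0 b1 divr1 Tr2n_split (eqP Ha1) addxx Tr0 sgnF0.
have HS : \sum_(u | inU u) sgnF (G u) = 1 + q%:Z * sgnF (Tr1 n a1).
  rewrite (SUb Hb) (eq_bigr (fun _ => sgnF (Tr1 n a1))); last first.
    move=> u /andP [Hu ub]; rewrite /G Tr2n_split; congr (sgnF (Tr1 n _)).
    have u0 := inU_neq0 Hu.
    have ub0 : u + 1 != 0 by rewrite addr_eq0 oppx -b1.
    rewrite exprMn (eqP Ha1) conjV conjD (inU_conj Hu) b1 expr1n -mulrDr.
    have -> : (u + 1)^-1 + (u^-1 + 1)^-1 = 1 by field; rewrite u0 addrC ub0.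
    by rewrite mulr1.
  congr (_ + _); rewrite b1.
  by rewrite (sumr_const [pred u | inU u && (u != 1)]) card_U1 -mulr_natl natz.
case: (bent_nec HG Hbent) => [|[_ H]].
  rewrite HS e1 => H.
  have : q%:Z * sgnF (Tr1 n a1) = 0 by apply: (addrI 1); rewrite addr0.
  have := q_gt1; rewrite -ltz_nat.
  by case: (sgnF_pm (Tr1 n a1)) => ->; lia.
by have := H b Hb; rewrite sgnGb e1.
Qed.

Lemma sum_Ub0 : inU b -> b != 1 -> \sum_(u | inU u && (u != b)) sgnF (G u) = 0.
Proof.
move=> Hb b1.
have bq : b ^+ q = b^-1 := inU_conj Hb.
have H2 := two0.
have bb0 : b^-1 + b != 0.
  apply/negP => /eqP H.
  have E : b^-1 = b by apply/eqP; rewrite -[X in _ == X]oppx -addr_eq0 H.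
  have : (b + 1) ^+ 2 = 0 by rewrite sqrD expr1n expr2 -{1}E mulVf // addxx.
  by move/eqP; rewrite expf_eq0 /= addr_eq0 oppx (negbTE b1).
set c := a1 * (b^-1 + b).
have Hc : inFq c.
  by apply: inFqM => //; rewrite /inFq conjD conjV bq invrK addrC.
have c0 : c != 0 by rewrite mulf_neq0.
case: (exists_Tr1c Hc c0) => t0 [Ht0 Htr].
set d := t0 / b.
have bd : b * d = t0 by rewrite /d mulrC divfK.
have Hd : Tr1 (2 * n) (a1 * d) = 1.
  rewrite Tr2n_split -Htr; congr (Tr1 n _).
  rewrite exprMn (eqP Ha1) /d exprMn (eqP Ht0) conjV bq invrK /c; by ring.
pose sig := fun u : F => ((u + b)^-1 + d)^-1 + b.
have sigK : involutive sig.
  by move=> u; rewrite /sig /= addrKK invrK addrKK invrK addrKK.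
have key : forall u, inU u -> u != b -> inU (sig u) && (sig u != b).
  move=> u Hu ub; have u0 := inU_neq0 Hu.
  have ub0 : u + b != 0 by rewrite addr_eq0 oppx.
  set z' := (u + b)^-1 + d.
  have HY : b * z' + (b * z') ^+ q = 1.
    rewrite /z' mulrDr bd conjD (eqP Ht0) exprMn conjV conjD (inU_conj Hu) bq.
    rewrite addrACA addxx addr0.
    by field; rewrite b0 u0 addrC ub0.
  have z'0 : z' != 0.
    by apply/negP => /eqP H; move: HY; rewrite H mulr0 expr0n expn_eq0 addr0 => /eqP; rewrite eq_sym oner_eq0.
  have zq0 : z' ^+ q != 0 by rewrite expf_neq0.
  have -> : sig u = z'^-1 + b by []. clearbody z'.
  apply/andP; split; last first.
    by rewrite -[X in _ != X]add0r (inj_eq (addIr b)) invr_eq0.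
  rewrite /inU exprSr conjD conjV bq.
  move: HY; rewrite exprMn bq => HY.
  have HY2 : b * b * z' + z' ^+ q = b.
    by rewrite -[RHS]mulr1 -HY mulrDr !mulrA mulfV // mul1r.
  apply/eqP; move: HY2 zq0; move: (z' ^+ q) => zq HY2 zq0.
  have -> : (zq^-1 + b^-1) * (z'^-1 + b) = (b + zq) * (1 + b * z') / (zq * (z' * b)).
    by field; rewrite zq0 z'0 b0.
  have E : zq = b + b * b * z' by apply: (addIr (b * b * z')); rewrite [LHS]addrC HY2 addrKK.
  have -> : (b + zq) * (1 + b * z') = zq * (z' * b) by rewrite E addrA addxx add0r; ring.
  by rewrite divff // !mulf_neq0.
have Hs : forall u, inU u -> u != b -> sgnF (G (sig u)) = - sgnF (G u).
  move=> u Hu ub; rewrite /G /sig addrKK invrK mulrDr TrD Hd sgnD ?sgnF1 ?mulrN1 //.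
    exact: Tr2n01.
  by right.
set s := (X in X = _).
have : s = - s.
  rewrite {1}/s (reindex_inj (can_inj sigK)) /= -sumrN; apply: eq_big => u.
    apply/idP/idP => /andP [Hu ub]; last exact: key.
    by have := key _ Hu ub; rewrite sigK.
  move=> /andP [Hu ub]; have := key _ Hu ub; rewrite sigK => /andP [Hu' ub'].
  by rewrite Hs.
lia.
Qed.

Lemma caseA2 : inU b -> b != 1 ->
  (bent (2 * n) (fun x : F => Tr1 (2 * n) (a1 / (x ^+ (q - 1) + b))) <->
   Tr1 (2 * n) (a1 / b) = 0).
Proof.
move=> Hb b1.
have HS : \sum_(u | inU u) sgnF (G u) = 1 by rewrite SUb // sum_Ub0 // addr0.
split.
  move=> Hbent; case: (bent_nec HG Hbent) => [|[_ H]].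
    by rewrite HS -G0 => /esym /sgn_eq1.
  exfalso; have Hb' := H b Hb; rewrite sgnGb in Hb'.
  move: HS; rewrite (eq_bigr (fun _ => 1)); last by move=> u Hu; rewrite H // -Hb'.
  rewrite (sumr_const [pred u | inU u]) card_U => /eqP.
  by rewrite natz => /eqP; have := q_gt1; lia.
move=> Htr; apply: (bent_suff HG); by rewrite HS G0 Htr sgnF0.
Qed.

Section CaseB.
Hypothesis Hb : ~~ inU b.
Let bq := b ^+ q.
Let M := 1 + b * bq.
Let a := a1 / M.

Lemma bq0 : bq != 0.
Proof. by rewrite expf_neq0. Qed.

Lemma M0 : M != 0.
Proof.
apply/negP; rewrite /M addr_eq0 oppx => /eqP H.
by move: Hb; rewrite /inU exprSr mulrC -H eqxx.
Qed.

Lemma inFqM_ : inFq M.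
Proof. by apply: inFqD; [exact: inFq1 | exact: inFq_norm]. Qed.

Lemma inFqa : inFq a.
Proof. by apply: inFqM => //; apply: inFqV; exact: inFqM_. Qed.

Lemma a0 : a != 0.
Proof. by rewrite mulf_neq0 // invr_neq0 // M0. Qed.

Lemma q_gt2 : (2 < q)%N.
Proof.
have := q_gt1; rewrite leq_eqVlt => /orP [/eqP Hq|] //; exfalso.
have HN := inFq_norm b; move: HN; rewrite /inFq -Hq.
set N := b * b ^+ _ => HN.
have : N * (N - 1) = 0 by rewrite mulrBr mulr1 -expr2 (eqP HN) subrr.
move/eqP; rewrite mulf_eq0 subr_eq0 => /orP [|/eqP N1].
  by rewrite /N mulf_eq0 (negbTE b0) expf_eq0 (negbTE b0) andbF.
by move: Hb; rewrite /inU exprSr mulrC -Hq -/N N1 eqxx.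
Qed.

Definition psi v := M / (v + bq) + b.

Lemma psi_inj : injective psi.
Proof.
move=> v1 v2 /addIr /(mulfI M0) /invr_inj /addIr //.
Qed.

Lemma psiU v : inU (psi v) = inU v.
Proof.
have H2 := two0.
have hbq : ~~ inU bq by rewrite /bq inU_conjq.
case: (eqVneq (v + bq) 0) => [z0|z0].
  have -> : v = bq by apply/eqP; rewrite -[X in _ == X]oppx -addr_eq0 z0.
  by rewrite /psi addxx invr0 mulr0 add0r (negbTE Hb) (negbTE hbq).
set z := v + bq.
have zq : z ^+ q = v ^+ q + b by rewrite /z conjD /bq conjK.
have zq0 : v ^+ q + b != 0 by rewrite -zq expf_neq0.
rewrite /inU exprSr /psi conjD exprMn (eqP inFqM_) conjV zq -/bq.
rewrite [in RHS]exprSr.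
set vq := v ^+ q.
have zE : z = v + bq by [].
rewrite -zE.
have vqz : vq + b != 0 := zq0.
have z0' : z != 0 := z0.
clearbody vq z.
have Id : (M + bq * (vq + b)) * (M + b * z) = z * (vq + b) + M * (1 + v * vq).
  have Id2 : (M + bq * (vq + b)) * (M + b * z) = z * (vq + b) + M * (1 + v * vq) +
      2%:R * ((b * bq) * (b * v + bq * vq) - v * vq + (b * bq) * (1 + 2%:R * (b * bq))).
    rewrite zE /M; ring.
  by rewrite Id2 two0 mul0r addr0.
have -> : (M * (vq + b)^-1 + bq) * (M / z + b) = 1 + M * (1 + v * vq) / (z * (vq + b)).
  have -> : (M * (vq + b)^-1 + bq) * (M / z + b) =
      (M + bq * (vq + b)) * (M + b * z) / (z * (vq + b)).
    by field; rewrite vqz z0'.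
  by rewrite Id; field; rewrite vqz z0'.
rewrite -[X in _ == X](addr0 1) (inj_eq (addrI 1)) !mulf_eq0 invr_eq0 !mulf_eq0 (negbTE z0') (negbTE vqz) (negbTE M0) /= ?orbF.
by rewrite addr_eq0 oppx eq_sym mulrC.
Qed.

Lemma S_B : \sum_(u | inU u) sgnF (G u) =
  sgnF (Tr1 (2 * n) (a * bq)) * \sum_(v | inU v) sgnF (Tr1 (2 * n) (a * v)).
Proof.
rewrite (reindex_inj psi_inj) /= (eq_bigl (fun v => inU v)); last by move=> v; rewrite psiU.
rewrite mulr_sumr; apply: eq_bigr => v Hv.
have hbq : ~~ inU bq by rewrite /bq inU_conjq.
have z0 : v + bq != 0.
  apply/negP => z0; move: hbq; suff -> : bq = v by rewrite Hv.
  by apply/eqP; rewrite -[X in _ == X]oppx -addr_eq0 addrC.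
rewrite /G /psi addrKK.
have -> : a1 / (M / (v + bq)) = a * v + a * bq.
  rewrite /a; field; by rewrite z0 M0.
rewrite TrD sgnD; [exact: mulrC | exact: Tr2n01 | exact: Tr2n01].
Qed.

Definition tB := Tr1 n (a1 * (b + bq) / (M * (b * bq))).

Lemma tr_rel : Tr1 (2 * n) (a1 / b) = Tr1 (2 * n) (a * bq) + tB.
Proof.
rewrite !Tr2n_split /tB -TrD; congr (Tr1 n _).
rewrite !exprMn (eqP Ha1) !conjV (eqP inFqM_) /bq conjK -/bq.
rewrite /a /M; field; by rewrite b0 bq0 -/M M0.
Qed.

Lemma tB01 : tB = 0 \/ tB = 1.
Proof.
have E : tB = Tr1 (2 * n) (a1 / b) + Tr1 (2 * n) (a * bq).
  by rewrite tr_rel addrC addrA addxx add0r.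
rewrite E; case: (Tr2n01 (a1 / b)) => ->; case: (Tr2n01 (a * bq)) => ->;
  rewrite ?addr0 ?add0r ?addxx; by [left | right].
Qed.

Lemma caseB :
  (bent (2 * n) (fun x : F => Tr1 (2 * n) (a1 / (x ^+ (q - 1) + b))) <->
   kloosterman n a = 0 /\ tB = 0).
Proof.
have HS := S_B; rewrite (T_K inFqa a0) in HS.
have He : sgnF (G 0) = sgnF (Tr1 (2 * n) (a * bq)) * sgnF tB.
  by rewrite G0 tr_rel sgnD //; [exact: Tr2n01 | exact: tB01].
have K2 := K_ne2 inFqa a0 q_gt2.
have Hsq := sgn_sq (Tr1 (2 * n) (a * bq)).
split.
  move=> Hbent; case: (bent_nec HG Hbent) => [HSe|[Hq _]]; last first.
    by have := q_gt2; rewrite Hq.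
  rewrite HS He in HSe.
  have HSe' : 1 - kloosterman n a = sgnF tB.
    have s0 : sgnF (Tr1 (2 * n) (a * bq)) != 0 by case: (sgnF_pm (Tr1 (2 * n) (a * bq))) => ->.
    by apply: (mulfI s0); rewrite HSe.
  case: tB01 => Et.
    split => //; move: HSe'; rewrite Et sgnF0 => H; lia.
  exfalso; move: HSe' K2; rewrite Et sgnF1 => H /eqP; apply; lia.
move=> [HK Ht]; apply: (bent_suff HG).
by rewrite HS He Ht HK sgnF0 subr0 !mulr1.
Qed.

End CaseB.

Lemma main_equiv :
  bent (2 * n) (fun x : F => Tr1 (2 * n) (a1 / (x ^+ (2 ^ n - 1) + b))) <->
  ((b ^+ (2 ^ n + 1) = 1 /\ b != 1 /\ Tr1 (2 * n) (a1 / b) = 0)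
   \/
   (b ^+ (2 ^ n + 1) != 1 /\
    kloosterman n (a1 / (1 + b * b ^+ (2 ^ n))) = 0 /\
    Tr1 n (a1 * (b + b ^+ (2 ^ n)) /
           ((1 + b * b ^+ (2 ^ n)) * (b * b ^+ (2 ^ n)))) = 0)).
Proof.
have E : b ^+ (2 ^ n + 1) = b ^+ q.+1 by rewrite addn1.
rewrite E.
case: (boolP (inU b)) => Hb.
  have Hb' : b ^+ q.+1 = 1 := eqP Hb.
  case: (eqVneq b 1) => [b1|b1].
    split; first by move/(notbent_b1 b1).
    case => [[_ [H _]]|[H _]]; first by move: H; rewrite ?b1 ?eqxx.
    by rewrite Hb' eqxx in H.
  rewrite (caseA2 Hb b1); split => [H|]; first by left.
  by case => [[_ [_ H]]|[H _]] //; rewrite Hb' eqxx in H.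
have Hb' : b ^+ q.+1 != 1 := Hb.
rewrite (caseB Hb) /tB; split => [[HK Ht]|]; first by right.
by case => [[H _]|[_ [HK Ht]]]; first by rewrite H eqxx in Hb'.
Qed.

End MainThm.

End Main.

Unset Implicit Arguments.
Set Strict Implicit.

Theorem theorem1 (n : nat) (F : finFieldType) (a1 b : F) :
  (0 < n)%N ->
  #|F| = (2 ^ (2 * n))%N ->
  a1 ^+ (2 ^ n) = a1 -> a1 != 0 ->
  b != 0 ->
  bent (2 * n) (fun x : F => Tr1 (2 * n) (a1 / (x ^+ (2 ^ n - 1) + b)))
  <->
  ((b ^+ (2 ^ n + 1) = 1 /\ b != 1 /\ Tr1 (2 * n) (a1 / b) = 0)
   \/
   (b ^+ (2 ^ n + 1) != 1 /\
    kloosterman n (a1 / (1 + b * b ^+ (2 ^ n))) = 0 /\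
    Tr1 n (a1 * (b + b ^+ (2 ^ n)) /
           ((1 + b * b ^+ (2 ^ n)) * (b * b ^+ (2 ^ n)))) = 0)).
Proof.
move=> hn hc ha ha0 hb0.
apply: main_equiv => //.
by rewrite /inFq ha.
Qed.
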